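(* Let $(B,g)$ be a feasible tradable credit scheme and let the travel times $\tau$ have a convex potential function. Then $\lambda\in\mathbb{R}_{\ge0}$ is a market equilibrium price if and only if $\lambda\in[\underline\lambda,\overline\lambda]$, where $\underline\lambda=\min\{\lambda\ge0:\exists x\in\mathrm{WE}(\lambda)\text{ with }G(x)\le B\}$ and $\overline\lambda=\sup\bigl(\{\lambda\ge0:\exists x\in\mathrm{WE}(\lambda)\text{ with }G(x)\ge B\}\cup\{0\}\bigr)$.
   Context: Let $G=(V,E)$ be a directed graph and $I$ a finite set of commodities; commodity $i$ has source $s_i$, sink $t_i$, demand $d_i>0$; $\mathcal P_i$ is its set of simple $s_i$–$t_i$ paths, $\mathcal P=\{(i,p)\}$. A flow $x\in\mathbb{R}^{\mathcal P}_{\ge0}$ is feasible if $\sum_{p\in\mathcal P_i}x_{i,p}=d_i$; $\mathcal F$ is the set of feasible flows; $x_e$ is the total flow on edge $e$. A tradable credit scheme is a pair $(B,g)$ with $B\ge0$ (number of credits) and credit charges $g_e\ge0$ for $e\in E$; $G(x)=\sum_eg_ex_e$. It is feasible if some $x\in\mathcal F$ has $G(x)\le B$. Travel times $\tau_{i,p}:\mathcal F\to\mathbb{R}$ have a convex potential: a convex differentiable $\Phi$ with $\tau_{i,p}(x)=\partial\Phi/\partial x_{i,p}(x)$ on $\mathcal F$. For $\lambda\ge0$, $c^\lambda_{i,p}(x)=\tau_{i,p}(x)+\lambda\sum_{e\in p}g_e$; $x\in\mathrm{WE}(\lambda)$ means $x\in\mathcal F$ and $x_{i,p}>0$ implies $c^\lambda_{i,p}(x)\le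 c^\lambda_{i,q}(x)$ for all $q\in\mathcal P_i$. A pair $(x,\lambda)$ with $x\in\mathcal F$, $\lambda\ge0$ is a market equilibrium if $x\in\mathrm{WE}(\lambda)$, $G(x)\le B$ and $\lambda(G(x)-B)=0$; then $\lambda$ is a market equilibrium price. *)

(* Defs.v *)
From HB Require Import structures.
From mathcomp Require Import all_boot all_order all_algebra.
From mathcomp Require Import boolp classical_sets reals constructive_ereal ereal.
Set Implicit Arguments. Unset Strict Implicit. Unset Printing Implicit Defensive.
Import Order.TTheory GRing.Theory Num.Theory.
Local Open Scope ring_scope.
Local Open Scope classical_set_scope.

Section TCS.
Variables (R : realType) (V : finType) (E : rel V) (I : finType) (s t : I -> V).

(* vertex sequences of length <= #|V| (every simple path fits) *)
Definition vpath := {n : 'I_(#|V|).+1 & n.-tuple V}.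
Definition vseq (p : vpath) : seq V := tagged p.

Definition simple_path (a b : V) (q : seq V) : bool :=
  match q with
  | v :: q' => [&& v == a, path E v q', last v q' == b & uniq q]
  | [::] => false
  end.

Definition is_cpath (ip : I * vpath) : bool :=
  simple_path (s ip.1) (t ip.1) (vseq ip.2).

Definition cpath := {ip : I * vpath | is_cpath ip}.
Definition com (p : cpath) : I := (val p).1.
Definition pedges (p : cpath) : seq (V * V) :=
  let q := vseq (val p).2 in zip q (behead q).

Definition feasible_flow (d : I -> R) (x : cpath -> R) : Prop :=
  (forall p, 0 <= x p) /\ (forall i, \sum_(p : cpath | com p == i) x p = d i).

Definition edge_flow (x : cpath -> R) (e : V * V) : R :=
  \sum_(p : cpath | e \in pedges p) x p.

Definition Gtot (g : V -> V -> R) (x : cpath -> R) : R :=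
  \sum_(e : V * V | E e.1 e.2) g e.1 e.2 * edge_flow x e.

Definition pcharge (g : V -> V -> R) (p : cpath) : R :=
  \sum_(e <- pedges p) g e.1 e.2.

Definition gcost (tau : (cpath -> R) -> cpath -> R) (g : V -> V -> R)
  (l : R) (x : cpath -> R) (p : cpath) : R := tau x p + l * pcharge g p.

Definition WE (d : I -> R) tau g (l : R) (x : cpath -> R) : Prop :=
  feasible_flow d x /\
  forall p q : cpath, com p = com q -> 0 < x p -> gcost tau g l x p <= gcost tau g l x q.

Definition feasible_scheme (d : I -> R) (B : R) (g : V -> V -> R) : Prop :=
  0 <= B /\ (forall u v, E u v -> 0 <= g u v) /\
  exists x, feasible_flow d x /\ Gtot g x <= B.

Definition market_eq (d : I -> R) tau g (B : R) (x : cpath -> R) (l : R) : Prop :=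
  [/\ feasible_flow d x, 0 <= l, WE d tau g l x, Gtot g x <= B
    & l * (Gtot g x - B) = 0].

Definition market_eq_price d tau g B (l : R) : Prop :=
  exists x, market_eq d tau g B x l.

Definition has_gradient (Phi : (cpath -> R) -> R) (x D : cpath -> R) : Prop :=
  forall eps : R, 0 < eps -> exists2 delta : R, 0 < delta &
    forall y : cpath -> R, (forall p, `|y p - x p| <= delta) ->
      `|Phi y - Phi x - \sum_(p : cpath) D p * (y p - x p)|
        <= eps * \sum_(p : cpath) `|y p - x p|.

Definition convex_potential (d : I -> R) (tau : (cpath -> R) -> cpath -> R)
  (Phi : (cpath -> R) -> R) : Prop :=
  (forall x y (a : R), feasible_flow d x -> feasible_flow d y -> 0 <= a <= 1 ->
     Phi (fun p => a * x p + (1 - a) * y p) <= a * Phi x + (1 - a) * Phi y) /\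
  (forall x, feasible_flow d x -> has_gradient Phi x (tau x)).

Definition low_set d tau g (B : R) : set R :=
  [set l | 0 <= l /\ exists x, WE d tau g l x /\ Gtot g x <= B].

Definition up_set d tau g (B : R) : set R :=
  [set l | 0 <= l /\ exists x, WE d tau g l x /\ B <= Gtot g x].

(* overline lambda, in the extended reals (may be +oo) *)
Definition lambda_bar d tau g (B : R) : \bar R :=
  ereal_sup ([set (l%:E) | l in up_set d tau g B] `|` [set 0%E]).

End TCS.

(* Main.v *)
Require Import Defs.
From HB Require Import structures.
From mathcomp Require Import all_boot all_order all_algebra.
From mathcomp Require Import boolp classical_sets functions reals constructive_ereal ereal.
From mathcomp Require Import topology normedtype derive.
From mathcomp Require Import ring lra.
Set Implicit Arguments. Unset Strict Implicit. Unset Printing Implicit Defensive.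
Import Order.TTheory GRing.Theory Num.Theory.
Import numFieldNormedType.Exports.
Local Open Scope ring_scope.
Local Open Scope classical_set_scope.

Section Topo.
Variable R : realType.

Definition unvec (T : finType) (v : 'rV[R]_#|T|) : T -> R :=
  fun p => v ord0 (enum_rank p).
Definition vec (T : finType) (x : T -> R) : 'rV[R]_#|T| := \row_j x (enum_val j).

Lemma unvecK (T : finType) (x : T -> R) : unvec (vec x) = x.
Proof. by apply: funext => p; rewrite /unvec /vec mxE enum_rankK. Qed.

Lemma cont_big (U : topologicalType) (X : Type) (s : seq X) (P : pred X)
  (F : X -> U -> R) : (forall j, continuous (F j)) ->
  continuous (fun v => \sum_(j <- s | P j) F j v).
Proof.
move=> HF; elim: s => [|a s IH].
  have -> : (fun v => \sum_(j <- [::] | P j) F j v) = (fun=> 0).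
    by apply: funext => v; rewrite big_nil.
  exact: cst_continuous.
case Pa: (P a).
  have -> : (fun v => \sum_(j <- a :: s | P j) F j v) =
     (fun v => F a v + \sum_(j <- s | P j) F j v).
    by apply: funext => v; rewrite big_cons Pa.
  by move=> x; apply: continuousD; [exact: HF | exact: IH].
have -> : (fun v => \sum_(j <- a :: s | P j) F j v) =
     (fun v => \sum_(j <- s | P j) F j v).
  by apply: funext => v; rewrite big_cons Pa.
exact: IH.
Qed.

Lemma cont_lin (T : finType) (a : T -> R) :
  continuous (fun v : 'rV[R]_#|T| => \sum_p a p * unvec v p).
Proof.
apply: cont_big => p x; apply: continuousM.
  exact: cst_continuous.
exact: coord_continuous.
Qed.

Lemma within_cont_rV n (A : set 'rV[R]_n) (f : 'rV[R]_n -> R) :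
 (forall x, A x -> forall e, 0 < e -> exists2 d, 0 < d &
    forall y, A y -> (forall j, `|x ord0 j - y ord0 j| < d) -> `|f x - f y| < e) ->
 {within A, continuous f}.
Proof.
move=> H; apply/subspace_continuousP => x Ax; apply/cvg_ballP => e e0.
have [d d0 Hd] := H x Ax e e0.
rewrite /within /=; apply/nbhs_ballP; exists d => //= y bxy Ay.
apply: Hd => // j. 
move: bxy => [_ /(_ ord0 j)].
by [].
Qed.


Lemma fin_EVT (T : finType) (A : (T -> R) -> Prop) (f : (T -> R) -> R) (D : R) :
  (exists x, A x) ->
  (forall x, A x -> forall p, 0 <= x p <= D) ->
  closed [set v : 'rV[R]_#|T| | A (unvec v)] ->
  (forall x, A x -> forall e, 0 < e -> exists2 d, 0 < d &
     forall y, A y -> (forall p, `|x p - y p| < d) -> `|f x - f y| < e) ->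
  exists2 x, A x & forall y, A y -> f x <= f y.
Proof.
move=> [x0 Ax0] Hbox Hcl Hcont.
have ne : [set v : 'rV[R]_#|T| | A (unvec v)] !=set0.
  by exists (vec x0) => /=; rewrite unvecK.
have cpt : compact [set v : 'rV[R]_#|T| | A (unvec v)].
  apply: (subclosed_compact Hcl (@rV_compact _ _ (fun=> `[0, D]%classic) _)).
    by move=> _; exact: segment_compact.
  move=> v /= Av i; rewrite in_itv /=.
  by have := Hbox _ Av (enum_val i); rewrite /unvec enum_valK.
have fc : {within [set v : 'rV[R]_#|T| | A (unvec v)], continuous (fun v => f (@unvec T v))}.
  apply: within_cont_rV => x Ax e e0.
  have [d d0 Hd] := Hcont _ Ax e e0.
  exists d => // y Ay Hy; apply: Hd => // p; exact: Hy.
have [c] := compact_EVT_min ne cpt fc.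
rewrite inE /= => Ac Hc; exists (unvec c) => // y Ay.
have := Hc (vec y); rewrite inE /= unvecK; apply; exact.
Qed.
End Topo.

Lemma zip_edges (V : eqType) (E : rel V) (v : V) (q : seq V) :
  path E v q -> forall e, e \in zip (v :: q) q -> E e.1 e.2.
Proof.
elim: q v => [|w q IH] v //= /andP[Evw pq] e; rewrite inE => /orP[/eqP -> //|].
exact: IH.
Qed.

Section Main.
Variables (R : realType) (V : finType) (E : rel V) (I : finType) (s t : I -> V).
Local Notation P := (cpath E s t).

Lemma pedges_uniq (p : P) : uniq (pedges p).
Proof.
rewrite /pedges; case: p => [[i q]] /=; rewrite /is_cpath /=.
case: (vseq q) => [|v q'] //= /and4P[_ _ _ uq]; exact: zip_uniql.
Qed.

Lemma pedges_E (p : P) e : e \in pedges p -> E e.1 e.2.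
Proof.
rewrite /pedges; case: p => [[i q]] /=; rewrite /is_cpath /=.
case: (vseq q) => [|v q'] //= /and4P[_ pq _ _]; exact: zip_edges.
Qed.

Lemma GtotE (g : V -> V -> R) (x : P -> R) :
  Gtot g x = \sum_p x p * pcharge g p.
Proof.
rewrite /Gtot /edge_flow.
under eq_bigr do rewrite mulr_sumr.
rewrite (exchange_big_dep (fun _ => true)) //=.
apply: eq_bigr => p _; rewrite /pcharge mulr_sumr big_uniq ?pedges_uniq //.
rewrite [RHS]big_mkcond [LHS]big_mkcond /=; apply: eq_bigr => e _.
case ep: (e \in pedges p); rewrite ?andbF ?andbT //.
by rewrite (pedges_E ep) mulrC.
Qed.

Lemma GtotE' (g : V -> V -> R) (x : P -> R) :
  Gtot g x = \sum_p pcharge g p * x p.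
Proof. by rewrite GtotE; apply: eq_bigr => p _; rewrite mulrC. Qed.

Lemma le_sum_term (T : finType) (F : T -> R) (q : T) :
  (forall p, 0 <= F p) -> F q <= \sum_p F p.
Proof.
move=> F0; rewrite (bigD1 q) //= lerDl; apply: sumr_ge0 => p _; exact: F0.
Qed.

Variables (d : I -> R) (tau : (P -> R) -> P -> R) (Phi : (P -> R) -> R).
Hypothesis hpot : convex_potential d tau Phi.

Lemma grad_ineq (x y : P -> R) : feasible_flow d x -> feasible_flow d y ->
  \sum_p tau x p * (y p - x p) <= Phi y - Phi x.
Proof.
move=> fx fy; rewrite leNgt; apply/negP => H.
set D := \sum_p tau x p * (y p - x p) in H.
set Dl := Phi y - Phi x in H.
set S := \sum_p `|y p - x p|.
have S0 : 0 <= S by apply: sumr_ge0 => p _.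
pose eps := (D - Dl) / (2 * (S + 1)).
have eps0 : 0 < eps by apply: divr_gt0; [rewrite subr_gt0|]; nra.
have [dl dl0 Hdl] := (hpot.2 x fx) eps eps0.
pose a := Num.min 1 (dl / (S + 1)).
have a0 : 0 < a by rewrite lt_min ltr01 /=; apply: divr_gt0 => //; lra.
have a1 : a <= 1 by rewrite ge_min lexx.
have a2 : a <= dl / (S + 1) by rewrite ge_min lexx orbT.
pose z := fun p => a * y p + (1 - a) * x p.
have zx : forall p, z p - x p = a * (y p - x p) by move=> p; rewrite /z; ring.
have conv : Phi z <= a * Phi y + (1 - a) * Phi x.
  apply: (hpot.1 y x a fy fx); rewrite a1 andbT; exact: ltW.
have Hz : forall p, `|z p - x p| <= dl.
  move=> p; rewrite zx normrM (gtr0_norm a0).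
  have h1 : `|y p - x p| <= S by apply: (@le_sum_term _ (fun p => `|y p - x p|) p) => r.
  have h2 : a * (S + 1) <= dl.
    by rewrite -(ler_pdivlMr _ _ (_ : 0 < S + 1)) //; lra.
  nra.
have := Hdl z Hz.
have -> : \sum_p tau x p * (z p - x p) = a * D.
  by rewrite /D mulr_sumr; apply: eq_bigr => p _; rewrite zx; ring.
have -> : \sum_p `|z p - x p| = a * S.
  rewrite /S mulr_sumr; apply: eq_bigr => p _.
  by rewrite zx normrM (gtr0_norm a0).
move=> /ler_normlW hh.
have hh' : - (eps * (a * S)) <= Phi z - Phi x - a * D.
  by move: (Hdl z Hz); rewrite ler_norml => /andP[+ _]; rewrite -/D; 
     (have -> : \sum_p tau x p * (z p - x p) = a * D by
        rewrite /D mulr_sumr; apply: eq_bigr => p _; rewrite zx; ring);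
     (have -> : \sum_p `|z p - x p| = a * S by
        rewrite /S mulr_sumr; apply: eq_bigr => p _; rewrite zx normrM (gtr0_norm a0)).
have k1 : a * D - eps * (a * S) <= a * Dl by rewrite /Dl; lra.
have k2 : D - eps * S <= Dl.
  have : a * (D - eps * S) <= a * Dl by lra.
  by rewrite ler_pM2l.
have k3 : eps * S < D - Dl.
  rewrite /eps mulrAC ltr_pdivrMr; last lra.
  nra.
lra.
Qed.

Lemma first_order (x v : P -> R) (k e0 : R) : feasible_flow d x -> 0 < e0 ->
  (forall e : R, 0 < e -> e <= e0 -> Phi x + e * k <= Phi (fun p => x p + e * v p)) ->
  k <= \sum_p tau x p * v p.
Proof.
move=> fx e00 Hk; rewrite leNgt; apply/negP => H.
set D := \sum_p tau x p * v p in H.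
set S := \sum_p `|v p|.
have S0 : 0 <= S by apply: sumr_ge0 => p _.
pose eps := (k - D) / (2 * (S + 1)).
have eps0 : 0 < eps by apply: divr_gt0; [rewrite subr_gt0|]; nra.
have [dl dl0 Hdl] := (hpot.2 x fx) eps eps0.
pose a := Num.min e0 (dl / (S + 1)).
have a0 : 0 < a by rewrite lt_min e00 /=; apply: divr_gt0 => //; lra.
have a1 : a <= e0 by rewrite ge_min lexx.
have a2 : a <= dl / (S + 1) by rewrite ge_min lexx orbT.
pose z := fun p => x p + a * v p.
have zx : forall p, z p - x p = a * v p by move=> p; rewrite /z; ring.
have Hz : forall p, `|z p - x p| <= dl.
  move=> p; rewrite zx normrM (gtr0_norm a0).
  have h1 : `|v p| <= S by apply: (@le_sum_term _ (fun p => `|v p|) p) => r.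
  have h2 : a * (S + 1) <= dl.
    by rewrite -(ler_pdivlMr _ _ (_ : 0 < S + 1)) //; lra.
  nra.
have hh : Phi z - Phi x - a * D <= eps * (a * S).
  move: (Hdl z Hz); rewrite ler_norml => /andP[_ +].
  have -> : \sum_p tau x p * (z p - x p) = a * D.
    by rewrite /D mulr_sumr; apply: eq_bigr => p _; rewrite zx; ring.
  have -> : \sum_p `|z p - x p| = a * S.
    by rewrite /S mulr_sumr; apply: eq_bigr => p _; rewrite zx normrM (gtr0_norm a0).
  by [].
have k0 := Hk a a0 a1.
have k1 : a * k <= a * D + eps * (a * S) by rewrite /z in hh; lra.
have k2 : k - eps * S <= D.
  have : a * (k - eps * S) <= a * D by lra.
  by rewrite ler_pM2l.
have k3 : eps * S < k - D.
  rewrite /eps mulrAC ltr_pdivrMr; last lra.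
  nra.
lra.
Qed.

Hypothesis hd : forall i, 0 < d i.

Lemma WE_key (g : V -> V -> R) (l : R) (x y : P -> R) : WE d tau g l x -> feasible_flow d y ->
  0 <= \sum_p gcost tau g l x p * (y p - x p).
Proof.
move=> [[x0 fx] Hwe] [y0 fy].
rewrite (partition_big (@com _ _ _ _ _) predT) //=.
apply: sumr_ge0 => i _.
have [p0 /andP[/eqP cp0 xp0]] : exists p : P, (com p == i) && (0 < x p).
  case: (boolP [exists p : P, (com p == i) && (0 < x p)]) => [/existsP//|/existsPn H].
  exfalso; have : \sum_(p : P | com p == i) x p <= \sum_(p : P | com p == i) (0 : R).
    apply: ler_sum => p cp; move: (H p); rewrite cp /= -leNgt; exact.
  by rewrite big1_eq fx leNgt hd.
set m := gcost tau g l x p0.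
have E1 : forall p : P, com p == i ->
    gcost tau g l x p * (y p - x p) =
    (gcost tau g l x p - m) * y p + m * y p - m * x p.
  move=> p /eqP cp.
  have : (gcost tau g l x p - m) * x p = 0.
    have := x0 p; rewrite le_eqVlt => /orP[/eqP <-|xp]; first by rewrite mulr0.
    have h1 : gcost tau g l x p <= m by apply: Hwe => //; rewrite cp cp0.
    have h2 : m <= gcost tau g l x p by apply: Hwe => //; rewrite cp cp0.
    have -> : gcost tau g l x p = m by apply/eqP; rewrite eq_le h1 h2.
    by rewrite subrr mul0r.
  move=> h; lra.
rewrite (eq_bigr _ E1) big_split /= big_split /= -!mulr_sumr.
rewrite sumrN -mulr_sumr fx fy addrK.
apply: sumr_ge0 => p /eqP cp; apply: mulr_ge0 => //.
rewrite subr_ge0; apply: Hwe => //; rewrite cp cp0 //.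
Qed.

Lemma arith1 (a b c dd f : R) : 0 <= a + (b - c) -> a <= dd - f -> f + c <= dd + b.
Proof. move=> h1 h2; lra. Qed.

Lemma WE_min (g : V -> V -> R) (l : R) (x y : P -> R) : WE d tau g l x -> feasible_flow d y ->
  Phi x + l * Gtot g x <= Phi y + l * Gtot g y.
Proof.
move=> hwe fy; have k := WE_key hwe fy; have gi := grad_ineq hwe.1 fy.
have e : \sum_p gcost tau g l x p * (y p - x p) =
    \sum_p tau x p * (y p - x p) + l * (Gtot g y - Gtot g x).
  rewrite !GtotE -sumrB mulr_sumr -big_split; apply: eq_bigr => p _.
  rewrite /gcost /= mulrDl -mulrA [pcharge g p * _]mulrC mulrBl //.
rewrite e mulrBr in k; move: k gi; apply: arith1.
Qed.

Definition mv (p q : P) : P -> R := fun r => (r == q)%:R - (r == p)%:R.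

Lemma sum_ind1 (F : P -> R) (q : P) : \sum_r F r * (r == q)%:R = F q.
Proof.
rewrite (bigD1 q) //= big1 => [|r /negbTE rq]; last by rewrite rq mulr0.
by rewrite eqxx mulr1 addr0.
Qed.

Lemma sum_ind_c (C : pred P) (q : P) :
  \sum_(r | C r) (r == q)%:R = (C q)%:R :> R.
Proof.
rewrite big_mkcond (bigD1 q) //= big1 => [|r /negbTE rq]; last first.
  by rewrite rq; case: ifP.
by rewrite eqxx addr0; case: (C q).
Qed.

Lemma sum_mv (F : P -> R) (p q : P) : \sum_r F r * mv p q r = F q - F p.
Proof.
rewrite -(sum_ind1 F q) -(sum_ind1 F p) -sumrB.
by apply: eq_bigr => r _; rewrite /mv mulrBr.
Qed.

Lemma diff_ind (i : I) (p q : P) :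
  \sum_(r | com r == i) (r == q)%:R - \sum_(r | com r == i) (r == p)%:R
  = (com q == i)%:R - (com p == i)%:R :> R.
Proof.
by congr (_ - _); [exact: (sum_ind_c (fun r => com r == i) q)|exact: (sum_ind_c (fun r => com r == i) p)].
Qed.

Lemma sum_mv_com (i : I) (p q : P) : com p = com q ->
  \sum_(r | com r == i) mv p q r = 0.
Proof.
move=> cpq; rewrite /mv sumrB diff_ind cpq subrr //.
Qed.

Lemma feas_add (x v : P -> R) : feasible_flow d x ->
  (forall i, \sum_(r | com r == i) v r = 0) -> (forall r, 0 <= x r + v r) ->
  feasible_flow d (fun r => x r + v r).
Proof.
move=> [_ fx] hv h0; split=> // i; by rewrite big_split /= fx hv addr0.
Qed.

Lemma mv_ge (p q r : P) : - (r == p)%:R <= mv p q r.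
Proof. by rewrite /mv lerDr; case: (r == q). Qed.

Lemma Gtot_add (g : V -> V -> R) (x v : P -> R) (e : R) :
  Gtot g (fun r => x r + e * v r) = Gtot g x + e * \sum_r pcharge g r * v r.
Proof.
rewrite !GtotE mulr_sumr -big_split; apply: eq_bigr => r _ /=.
by rewrite mulrDl [pcharge g r * v r]mulrC mulrA.
Qed.

Lemma arith2 (A B G l e D : R) : A + l * G <= B + l * (G + e * D) -> A + e * - (l * D) <= B.
Proof. move=> h; have: l * (G + e * D) = l * G + e * (l * D) by ring. lra. Qed.

Lemma arith3 (tp tq l cp cq : R) : - (l * (cq - cp)) <= tq - tp -> tp + l * cp <= tq + l * cq.
Proof. move=> h; have: l * (cq - cp) = l * cq - l * cp by ring. lra. Qed.

Lemma feas_mv (x : P -> R) (p q : P) (e : R) : feasible_flow d x -> com p = com q -> 0 <= e <= x p ->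
  feasible_flow d (fun r => x r + e * mv p q r).
Proof.
move=> fx cpq /andP[e0 ex]; apply: feas_add => //.
  by move=> i; rewrite -mulr_sumr sum_mv_com // mulr0.
move=> r; have := mv_ge p q r; have := fx.1 r.
case rp: (r == p); move/eqP: rp => rp; last first.
  by move=> xr; rewrite oppr0 => h; apply: addr_ge0 => //; apply: mulr_ge0.
rewrite rp => xr h; have h2 : e * - 1 <= e * mv p q p by rewrite ler_wpM2l.
by rewrite mulrN1 in h2; rewrite -(subrr e); apply: lerD => //; rewrite -subr_ge0 in ex.
Qed.

Lemma min_WE (g : V -> V -> R) (l : R) (x : P -> R) : feasible_flow d x ->
  (forall y, feasible_flow d y -> Phi x + l * Gtot g x <= Phi y + l * Gtot g y) ->
  WE d tau g l x.
Proof.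
move=> fx H; split => // p q cpq xp.
have := @first_order x (mv p q) (- (l * (pcharge g q - pcharge g p))) (x p) fx xp.
rewrite (sum_mv (tau x) p q) /gcost => h; apply: arith3; apply: h => e e0 ee0.
have fy := @feas_mv x p q e fx cpq _.
have := H _ (fy _); rewrite Gtot_add (sum_mv (pcharge g) p q) => h1; apply: arith2.
by apply: h1; rewrite (ltW e0) ee0.
Qed.

Lemma divle (x y a b : R) : 0 < a -> 0 < b -> x * a <= y * b -> x / b <= y / a.
Proof. move=> a0 b0 h. rewrite ler_pdivrMr // mulrAC ler_pdivlMr //. Qed.

Lemma glin (G0 B e e0 D : R) : G0 <= B -> G0 + e0 * D <= B -> 0 < e -> e <= e0 ->
  G0 + e * D <= B.
Proof. move=> h1 h2 h3 h4. case: (lerP D 0) => hD.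
 have : e * D <= 0 by nra. lra.
 have : e * D <= e0 * D by nra. lra. Qed.

Lemma ar6 (x e a b m1 m2 : R) :
  x + e * (a * m1 + b * m2) = x + e * a * m1 + e * b * m2.
Proof. ring. Qed.

Section KKT.
Variables (g : V -> V -> R) (B : R) (xs : P -> R).
Hypotheses (fxs : feasible_flow d xs) (Gxs : Gtot g xs <= B)
  (Hmin : forall y, feasible_flow d y -> Gtot g y <= B -> Phi xs <= Phi y).

Lemma fo_single (p q : P) (e0 : R) : 0 < xs p -> com p = com q -> 0 < e0 -> e0 <= xs p ->
  Gtot g xs + e0 * (pcharge g q - pcharge g p) <= B -> tau xs p <= tau xs q.
Proof.
move=> xp cpq e00 e0x hG.
have := @first_order xs (mv p q) 0 e0 fxs e00.
rewrite (sum_mv (tau xs) p q) subr_ge0; apply => e e0' ee0.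
rewrite mulr0 addr0; apply: Hmin.
  apply: feas_mv => //; rewrite (ltW e0') /=; exact: le_trans ee0 e0x.
rewrite Gtot_add (sum_mv (pcharge g) p q); exact: (glin Gxs hG).
Qed.

Lemma fo_double (p q p' q' : P) (a b : R) : 0 < xs p -> 0 < xs p' -> com p = com q ->
  com p' = com q' -> 0 < a -> 0 < b ->
  a * (pcharge g q - pcharge g p) + b * (pcharge g q' - pcharge g p') = 0 ->
  0 <= a * (tau xs q - tau xs p) + b * (tau xs q' - tau xs p').
Proof.
move=> xp xp' cpq cpq' a0 b0 hab.
pose v := fun r => a * mv p q r + b * mv p' q' r.
have sv : forall F : P -> R, \sum_r F r * v r =
    a * (F q - F p) + b * (F q' - F p').
  move=> F.
  transitivity (\sum_r (a * (F r * mv p q r) + b * (F r * mv p' q' r))).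
    by apply: eq_bigr => r _; rewrite /v mulrDr; congr (_ + _); rewrite mulrCA.
  rewrite big_split /=; congr (_ + _); rewrite -mulr_sumr; congr (_ * _); exact: sum_mv.
pose e0 := Num.min (xs p) (xs p') / (a + b).
have ab0 : 0 < a + b by lra.
have e00 : 0 < e0 by apply: divr_gt0 => //; rewrite lt_min xp xp'.
have := @first_order xs v 0 e0 fxs e00; rewrite sv; apply => e e0' ee0.
rewrite mulr0 addr0; apply: Hmin; last first.
  by rewrite Gtot_add sv hab mulr0 addr0.
have Eab : e * (a + b) <= Num.min (xs p) (xs p').
  by rewrite -ler_pdivlMr.
have Ep : e * (a + b) <= xs p by apply: (le_trans Eab); rewrite ge_min lexx.
have Ep' : e * (a + b) <= xs p' by apply: (le_trans Eab); rewrite ge_min lexx orbT.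
have -> : (fun r => xs r + e * v r) =
    (fun r => (xs r + (e * a) * mv p q r) + (e * b) * mv p' q' r).
  by apply: funext => r; rewrite /v; apply: ar6.
have ea0 : 0 <= e * a by apply: mulr_ge0; lra.
have eb0 : 0 <= e * b by apply: mulr_ge0; lra.
have f1 : feasible_flow d (fun r => xs r + (e * a) * mv p q r).
  apply: feas_mv => //; rewrite ea0 /=; apply: le_trans Ep; lra.
apply: (@feas_mv (fun r => xs r + (e * a) * mv p q r) p' q' (e * b) f1 cpq').
rewrite eb0 /=.
have := mv_ge p q p'; case: (eqVneq p' p) => [->|_] /=.
  move=> h; have : e * a * -1 <= e * a * mv p q p by rewrite ler_wpM2l.
  rewrite mulrN1 => h2; move: Ep; rewrite mulrDr => Ep; lra.
rewrite oppr0 => h; have : 0 <= e * a * mv p q p' by apply: mulr_ge0.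
move: Ep'; rewrite mulrDr => Ep'; lra.
Qed.

Lemma arith4 (tp tq l cp cq : R) : cp < cq -> (tp - tq) / (cq - cp) <= l ->
  tp + l * cp <= tq + l * cq.
Proof.
move=> h1; rewrite ler_pdivrMr ?subr_gt0 // => h2.
have: l * (cq - cp) = l * cq - l * cp by ring. lra.
Qed.

Lemma arith5 (tp tq l cp cq : R) : cq < cp -> l <= (tq - tp) / (cp - cq) ->
  tp + l * cp <= tq + l * cq.
Proof.
move=> h1; rewrite ler_pdivlMr ?subr_gt0 // => h2.
have: l * (cp - cq) = l * cp - l * cq by ring. lra.
Qed.

Lemma KKT : exists l, market_eq d tau g B xs l.
Proof.
have [GB|GB] := ltrP (Gtot g xs) B.
  exists 0; split => //; last by rewrite mul0r.
  split => // p q cpq xp; rewrite /gcost !mul0r !addr0.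
  pose D := pcharge g q - pcharge g p.
  pose e0 := Num.min (xs p) ((B - Gtot g xs) / (`|D| + 1)).
  have D1 : 0 < `|D| + 1 by have := normr_ge0 D; lra.
  have e00 : 0 < e0 by rewrite lt_min xp /=; apply: divr_gt0 => //; lra.
  apply: (fo_single xp cpq e00); first by rewrite ge_min lexx.
  have h1 : e0 * (`|D| + 1) <= B - Gtot g xs.
    by rewrite -ler_pdivlMr // ge_min lexx orbT.
  have h2 : e0 * D <= e0 * `|D| by rewrite ler_wpM2l ?ler_norm // ltW.
  rewrite mulrDr mulr1 in h1; change (Gtot g xs + e0 * D <= B); lra.
have GE : Gtot g xs = B by apply/eqP; rewrite eq_le Gxs GB.
pose lowc := fun pq : P * P => [&& 0 < xs pq.1, com pq.1 == com pq.2 &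
  pcharge g pq.1 < pcharge g pq.2].
pose L := \big[Num.max/0]_(pq : P * P | lowc pq)
   ((tau xs pq.1 - tau xs pq.2) / (pcharge g pq.2 - pcharge g pq.1)).
have L0 : 0 <= L by rewrite /L bigmax_idl le_max lexx.
exists L; split => //; last by rewrite GE subrr mulr0.
split => // p q cpq xp; rewrite /gcost.
case: (ltgtP (pcharge g p) (pcharge g q)) => hpq.
- apply: arith4 => //.
  by apply: (@le_bigmax_cond _ _ _ _ (p, q)); rewrite /lowc /= xp cpq eqxx hpq.
- apply: arith5 => //; apply/bigmax_leP; split.
    rewrite divr_ge0 // ?subr_ge0 ?(ltW hpq) //.
    apply: (fo_single xp cpq xp) => //; rewrite GE.
    have : xs p * (pcharge g q - pcharge g p) <= 0.
      by rewrite mulr_ge0_le0 ?subr_le0 ?(ltW hpq) ?(ltW xp).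
    lra.
  move=> [p1 q1] /and3P[/= xp1 /eqP cpq1 hpq1].
  apply: divle; rewrite ?subr_gt0 //.
  have := @fo_double p1 q1 p q (pcharge g p - pcharge g q)
    (pcharge g q1 - pcharge g p1) xp1 xp cpq1 cpq.
  rewrite !subr_gt0 => /(_ hpq hpq1) h.
  have : 0 <= (pcharge g p - pcharge g q) * (tau xs q1 - tau xs p1) +
    (pcharge g q1 - pcharge g p1) * (tau xs q - tau xs p).
    by apply: h; ring.
  move=> h'; have e1 : (tau xs p1 - tau xs q1) * (pcharge g p - pcharge g q) =
    - ((pcharge g p - pcharge g q) * (tau xs q1 - tau xs p1)) by ring.
  have e2 : (tau xs q - tau xs p) * (pcharge g q1 - pcharge g p1) =
    (pcharge g q1 - pcharge g p1) * (tau xs q - tau xs p) by ring.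
  rewrite e1 e2; lra.
- rewrite hpq lerD2r.
  apply: (fo_single xp cpq xp) => //; rewrite hpq subrr mulr0 addr0 //.
Qed.

End KKT.

Lemma closed_forall (n : nat) (J : Type) (Fm : J -> set 'rV[R]_n) :
  (forall j, closed (Fm j)) -> closed [set v | forall j, Fm j v].
Proof.
move=> h; have := @closed_bigI _ _ setT Fm (fun j _ => h j).
have -> : \bigcap_(j in setT) Fm j = [set v | forall j, Fm j v].
  by rewrite predeqE => v; split => hv j //; apply: hv.
by [].
Qed.

Lemma closed_lin_le (a : P -> R) (c : R) :
  closed [set v : 'rV[R]_#|(P : finType)| | \sum_p a p * unvec v p <= c].
Proof.
apply: (@preimage_closed _ _ (fun v : 'rV[R]_#|(P : finType)| => \sum_p a p * unvec v p) [set x | x <= c]).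
  by move=> v _; apply: cont_lin.
exact: closed_le.
Qed.

Lemma closed_lin_eq (a : P -> R) (c : R) :
  closed [set v : 'rV[R]_#|(P : finType)| | \sum_p a p * unvec v p = c].
Proof.
apply: (@preimage_closed _ _ (fun v : 'rV[R]_#|(P : finType)| => \sum_p a p * unvec v p) [set x | x = c]).
  by move=> v _; apply: cont_lin.
exact: closed_eq.
Qed.

Lemma closed_coord_ge (p : P) :
  closed [set v : 'rV[R]_#|(P : finType)| | 0 <= unvec v p].
Proof.
apply: (@preimage_closed _ _ (fun v : 'rV[R]_#|(P : finType)| => unvec v p) [set x | 0 <= x]).
  by move=> v _; apply: coord_continuous.
exact: closed_ge.
Qed.

Lemma sum_com_lin (i : I) (x : P -> R) :
  \sum_(p | com p == i) x p = \sum_p (com p == i)%:R * x p.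
Proof.
rewrite big_mkcond; apply: eq_bigr => p _.
by case: (com p == i); rewrite ?mul1r ?mul0r.
Qed.

Lemma K_closed (g : V -> V -> R) (B : R) :
  closed [set v : 'rV[R]_#|(P : finType)| | feasible_flow d (unvec v) /\ Gtot g (unvec v) <= B].
Proof.
have -> : [set v : 'rV[R]_#|(P : finType)| | feasible_flow d (unvec v) /\ Gtot g (unvec v) <= B] =
  [set v | forall p : P, 0 <= unvec v p] `&`
  [set v | forall i : I, \sum_(p : P) (com p == i)%:R * unvec v p = d i] `&`
  [set v | \sum_(p : P) pcharge g p * unvec v p <= B].
  rewrite predeqE => v; split.
    move=> [[h1 h2] h3]; split; [split|] => //=.
      by move=> i; rewrite -sum_com_lin.
    by rewrite -GtotE'.
  move=> [[h1 h2] h3]; split; [split|] => //=.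
    by move=> i; rewrite sum_com_lin.
  by rewrite GtotE'.
apply: closedI; [apply: closedI|].
- apply: closed_forall => p; exact: closed_coord_ge.
- apply: closed_forall => i; exact: closed_lin_eq.
- exact: closed_lin_le.
Qed.

Lemma Phi_cont (x : P -> R) (e : R) : feasible_flow d x -> 0 < e ->
  exists2 dl, 0 < dl & forall y, (forall p, `|x p - y p| < dl) -> `|Phi x - Phi y| < e.
Proof.
move=> fx e0.
have [d1 d10 Hd1] := (hpot.2 x fx) 1 ltr01.
pose M := \sum_p (`|tau x p| + 1).
have M0 : 0 <= M by apply: sumr_ge0 => p _; have := normr_ge0 (tau x p); lra.
pose dl' := Num.min d1 (e / (M + 1)).
have dl0 : 0 < dl' by rewrite lt_min d10 /=; apply: divr_gt0 => //; lra.
exists dl' => // z Hz.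
have Hz1 : forall p, `|z p - x p| <= d1.
  move=> p; rewrite distrC; apply: ltW; apply: (lt_le_trans (Hz p)).
  by rewrite ge_min lexx.
have Hg := Hd1 z Hz1; rewrite mul1r in Hg.
set S := \sum_p tau x p * (z p - x p) in Hg.
have hS : `|S| <= \sum_p `|tau x p| * `|z p - x p|.
  rewrite /S; apply: le_trans (ler_norm_sum _ _ _) _.
  by apply: ler_sum => p _; rewrite normrM.
have h1 : `|Phi z - Phi x| <= \sum_p (`|tau x p| + 1) * `|z p - x p|.
  have -> : \sum_p (`|tau x p| + 1) * `|z p - x p| =
    \sum_p `|tau x p| * `|z p - x p| + \sum_p `|z p - x p|.
    rewrite -big_split; apply: eq_bigr => p _ /=; rewrite mulrDl mul1r //.
  have : `|Phi z - Phi x| <= `|Phi z - Phi x - S| + `|S|.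
    by apply: le_trans (ler_normD _ _); rewrite subrK.
  lra.
have h2 : \sum_p (`|tau x p| + 1) * `|z p - x p| <= M * dl'.
  rewrite /M mulr_suml; apply: ler_sum => p _; apply: ler_wpM2l.
    by have := normr_ge0 (tau x p); lra.
  by rewrite distrC; apply: ltW.
have h3 : M * dl' < e.
  have : dl' <= e / (M + 1) by rewrite ge_min lexx orbT.
  rewrite ler_pdivlMr; last lra.
  move=> h; have : M * dl' <= M * dl' + dl' by lra.
  nra.
rewrite distrC; lra.
Qed.

Lemma aff_closed (c sl l : R) :
  (forall eps, 0 < eps -> exists2 l', 0 <= c + l' * sl & `|l' - l| <= eps) ->
  0 <= c + l * sl.
Proof.
move=> H; rewrite leNgt; apply/negP => h.
have hs := normr_ge0 sl.
pose eps := - (c + l * sl) / (`|sl| + 1).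
have s1 : 0 < `|sl| + 1 by lra.
have e0 : 0 < eps by apply: divr_gt0; lra.
have [l' h1 h2] := H eps e0.
have h3 : - (`|l' - l| * `|sl|) <= (l - l') * sl.
  have := ler_norm (- ((l - l') * sl)); rewrite normrN normrM distrC; lra.
have h4 : `|l' - l| * `|sl| <= eps * `|sl| by apply: ler_wpM2r.
have h5 : eps * (`|sl| + 1) = - (c + l * sl) by rewrite /eps divfK // gt_eqF.
rewrite mulrDr mulr1 in h5.
rewrite mulrBl in h3; lra.
Qed.
Lemma aff_conv (c sl l1 l2 l : R) : 0 <= c + l1 * sl -> 0 <= c + l2 * sl ->
  l1 <= l -> l <= l2 -> 0 <= c + l * sl.
Proof.
move=> h1 h2 h3 h4; case: (lerP 0 sl) => hs.
  have : l1 * sl <= l * sl by apply: ler_wpM2r. lra.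
have : l * sl >= l2 * sl by apply: ler_wnM2r => //; apply: ltW. lra.
Qed.
Lemma gc_aff (tp tq l cp cq : R) :
  (tp + l * cp <= tq + l * cq) <-> (0 <= (tq - tp) + l * (cq - cp)).
Proof. rewrite mulrBr; split => h; lra. Qed.
Lemma mono_ar (l1 l2 G1 G2 F1 F2 : R) : F1 + l1 * G1 <= F2 + l1 * G2 ->
  F2 + l2 * G2 <= F1 + l2 * G1 -> l1 < l2 -> G2 <= G1.
Proof.
move=> h1 h2 h3; rewrite leNgt; apply/negP => h4.
have : (l2 - l1) * (G2 - G1) > 0 by apply: mulr_gt0; lra.
rewrite mulrBl !mulrBr; lra.
Qed.

Lemma exists_min (g : V -> V -> R) (B : R) : feasible_scheme E s t d B g ->
  exists2 xs, feasible_flow d xs /\ Gtot g xs <= B &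
    forall y, feasible_flow d y /\ Gtot g y <= B -> Phi xs <= Phi y.
Proof.
move=> [_ [_ [x0 hx0]]].
apply: (@fin_EVT _ (P : finType) (fun x => feasible_flow d x /\ Gtot g x <= B) Phi
  (\sum_i d i)).
- by exists x0.
- move=> x [[x0p fx] _] p; rewrite x0p /=.
  apply: (@le_trans _ _ (d (com p))).
    rewrite -fx (bigD1 p) //= lerDl; apply: sumr_ge0 => r _; exact: x0p.
  apply: (@le_sum_term _ d (com p)) => i; exact: ltW.
- exact: K_closed.
- move=> x [fx _] e e0; have [dl dl0 Hdl] := @Phi_cont x e fx e0.
  by exists dl => // y _; apply: Hdl.
Qed.

Section MX.
Variables (g : V -> V -> R) (B : R) (xs : P -> R).
Hypotheses (fxs : feasible_flow d xs) (Gxs : Gtot g xs <= B)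
  (Hmin : forall y, feasible_flow d y -> Gtot g y <= B -> Phi xs <= Phi y).

Lemma Mchar (l : R) : market_eq_price d tau g B l -> market_eq d tau g B xs l.
Proof.
move=> [x1 [fx1 l0 we1 G1 sl1]].
have m1 := Hmin fx1 G1.
have slB : l * Gtot g x1 = l * B.
  by move: sl1; rewrite mulrBr => /eqP; rewrite subr_eq0 => /eqP.
have lG : l * Gtot g xs <= l * B by apply: ler_wpM2l.
have w := WE_min we1 fxs.
split => //.
  apply: min_WE => // y fy; have := WE_min we1 fy; lra.
rewrite mulrBr; lra.
Qed.

Lemma Mx_closed (l : R) : 0 <= l ->
  (forall eps : R, 0 < eps -> exists2 l', market_eq d tau g B xs l' & `|l' - l| <= eps) ->
  market_eq d tau g B xs l.
Proof.
move=> l0 H; split => //.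
- split => // p q cpq xp; apply/gc_aff; apply: aff_closed => eps e0.
  have [l' [_ _ [_ we'] _ _] hl] := H eps e0; exists l' => //.
  by apply/gc_aff; exact: we'.
- have h1 : 0 <= 0 + l * (Gtot g xs - B).
    apply: aff_closed => eps e0; have [l' [_ _ _ _ sl'] hl] := H eps e0.
    by exists l' => //; rewrite sl' addr0.
  have h2 : 0 <= 0 + l * (B - Gtot g xs).
    apply: aff_closed => eps e0; have [l' [_ _ _ _ sl'] hl] := H eps e0.
    by exists l' => //; rewrite -opprB mulrN sl' oppr0 addr0.
  have e : l * (B - Gtot g xs) = - (l * (Gtot g xs - B)) by rewrite -mulrN opprB.
  rewrite add0r in h1; rewrite add0r e in h2; lra.
Qed.

Lemma Mx_conv (l1 l2 l : R) : market_eq d tau g B xs l1 -> market_eq d tau g B xs l2 ->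
  l1 <= l -> l <= l2 -> market_eq d tau g B xs l.
Proof.
move=> [_ l10 [_ we1] _ sl1] [_ l20 [_ we2] _ sl2] h1 h2.
split => //.
- lra.
- split => // p q cpq xp; apply/gc_aff; apply: (aff_conv _ _ h1 h2).
    by apply/gc_aff; exact: we1.
  by apply/gc_aff; exact: we2.
- have e1 : 0 <= 0 + l * (Gtot g xs - B).
    by apply: (aff_conv _ _ h1 h2); rewrite ?sl1 ?sl2 addr0.
  have e2 : 0 <= 0 + l * (B - Gtot g xs).
    apply: (aff_conv _ _ h1 h2).
      by rewrite -opprB mulrN sl1 oppr0 addr0.
    by rewrite -opprB mulrN sl2 oppr0 addr0.
  have e : l * (B - Gtot g xs) = - (l * (Gtot g xs - B)) by rewrite -mulrN opprB.
  rewrite add0r in e1; rewrite add0r e in e2; lra.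
Qed.

End MX.


Lemma mono_WE (g : V -> V -> R) (l1 l2 : R) (x1 x2 : P -> R) :
  WE d tau g l1 x1 -> WE d tau g l2 x2 -> l1 < l2 -> Gtot g x2 <= Gtot g x1.
Proof.
move=> w1 w2 hl; exact: (mono_ar (WE_min w1 w2.1) (WE_min w2 w1.1) hl).
Qed.

Theorem main (g : V -> V -> R) (B : R) (hfeas : feasible_scheme E s t d B g) :
  exists lmin : R,
    [/\ low_set d tau g B lmin,
        (forall l, low_set d tau g B l -> lmin <= l)
      & forall l : R, 0 <= l ->
          (market_eq_price d tau g B l <->
           (lmin <= l /\ (l%:E <= lambda_bar d tau g B)%E))].
Proof.
have [xs [fxs Gxs] Hmin'] := exists_min hfeas.
have Hmin : forall y, feasible_flow d y -> Gtot g y <= B -> Phi xs <= Phi y.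
  by move=> y fy Gy; apply: Hmin'.
pose Mx := [set l | market_eq d tau g B xs l].
have [l0 Ml0] := KKT fxs Gxs Hmin.
have lb0 : lbound Mx 0 by move=> l [_ ? _ _ _].
have hinf : has_inf Mx by split; [exists l0 | exists 0].
pose lmin := inf Mx.
have lmin0 : 0 <= lmin by apply: lb_le_inf => //; exists l0.
have lminle : forall l, Mx l -> lmin <= l by move=> l Ml; exact: (ge_inf hinf.2).
have Mlmin : Mx lmin.
  change (market_eq d tau g B xs lmin).
  apply: (Mx_closed fxs Gxs lmin0) => eps e0.
  have [l' Ml' hl'] := inf_adherent e0 hinf.
  exists l' => //; have := lminle _ Ml'; rewrite -/lmin => h.
  rewrite ger0_norm; [lra | rewrite subr_ge0 //].
have weLmin : WE d tau g lmin xs by case: Mlmin.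
have Gxs_eq : 0 < lmin -> Gtot g xs = B.
  move=> lp; case: Mlmin => _ _ _ _ /eqP; rewrite mulf_eq0 => /orP[/eqP h|].
    by move: lp; rewrite h ltxx.
  by rewrite subr_eq0 => /eqP.
exists lmin; split.
- by split => //; exists xs; split.
- move=> l [l0' [x [we Gx]]]; rewrite leNgt; apply/negP => hl.
  have lpos : 0 < lmin by apply: le_lt_trans hl.
  have GB := Gxs_eq lpos.
  have h := mono_WE we weLmin hl.
  have GxB : Gtot g x = B by apply/eqP; rewrite eq_le Gx -GB h.
  have Ml : Mx l.
    change (market_eq d tau g B xs l).
    apply: (Mchar fxs Gxs Hmin); exists x; split => //; first exact: we.1.
    by rewrite GxB subrr mulr0.
  by have := lminle _ Ml; rewrite leNgt hl.
- move=> l l0'; split.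
  + move=> hM; have Ml := Mchar fxs Gxs Hmin hM; split; first exact: lminle.
    case: hM => x [fx _ we Gx sl].
    apply: ereal_sup_ubound.
    case: (eqVneq l 0) => [->|ln0]; [right => // | left].
    exists l => //; split => //; exists x; split => //.
    move/eqP: sl; rewrite mulf_eq0 (negbTE ln0) /= subr_eq0 => /eqP ->; exact: lexx.
  + move=> [hle hbar].
    have Ml : Mx l.
      case: (eqVneq l lmin) => [->//|lne].
      have hlt : lmin < l by rewrite lt_neqAle eq_sym lne hle.
      change (market_eq d tau g B xs l).
      apply: (Mx_closed fxs Gxs l0') => eps e0.
      pose e' := Num.min eps ((l - lmin) / 2).
      have e'1 : e' <= eps by rewrite ge_min lexx.
      have e'2 : e' <= (l - lmin) / 2 by rewrite ge_min lexx orbT.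
      have e'0 : 0 < e' by rewrite lt_min e0 /=; apply: divr_gt0 => //; lra.
      have : ((l - e')%:E < lambda_bar d tau g B)%E.
        by apply: lt_le_trans hbar; rewrite lte_fin; lra.
      move=> /ereal_sup_gt [sv [[mu hmu <-]| ->]] hlt2; last first.
        by exfalso; move: hlt2; rewrite lte_fin; lra.
      rewrite lte_fin in hlt2.
      case: hmu => mu0 [y [wy Gy]].
      have mupos : lmin < mu by lra.
      have h := mono_WE weLmin wy mupos.
      have GyB : Gtot g y = B by apply/eqP; rewrite eq_le Gy andbT; apply: le_trans h Gxs.
      have Mmu : Mx mu.
        change (market_eq d tau g B xs mu).
        apply: (Mchar fxs Gxs Hmin); exists y; split => //; first exact: wy.1.
        all: try by rewrite GyB ?subrr ?mulr0.

      exists (Num.min mu l).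
        apply: (Mx_conv fxs Gxs Mlmin Mmu).
          by rewrite le_min hle (ltW mupos).
        by rewrite ge_min lexx.
      case: (lerP mu l) => hml.
        rewrite ler0_norm ?subr_le0 //; lra.
      by rewrite subrr normr0 ltW.
    by exists xs.
Qed.

End Main.

Theorem lemma5p8 (R : realType) (V : finType) (E : rel V) (I : finType)
  (s t : I -> V) (d : I -> R) (hd : forall i, 0 < d i)
  (B : R) (g : V -> V -> R)
  (hfeas : feasible_scheme E s t d B g)
  (tau : (cpath E s t -> R) -> cpath E s t -> R)
  (Phi : (cpath E s t -> R) -> R)
  (hpot : convex_potential d tau Phi) :
  exists lmin : R,
    [/\ low_set d tau g B lmin,
        (forall l, low_set d tau g B l -> lmin <= l)
      & forall l : R, 0 <= l ->
          (market_eq_price d tau g B l <->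
           (lmin <= l /\ (l%:E <= lambda_bar d tau g B)%E))].
Proof. exact: (main hpot hd hfeas). Qed.
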